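(* Let $k\ge0$ and $N\ge0$ be integers and $a,b,c,d,e,f\in\mathbb{C}$ generic. For a polynomial $Q$ with $Q(N)\ne0$, put $R(n)=Q(N-n)/Q(N)$ and $$L_Q=\sum_{n=0}^N\frac{(a)_n(1+\tfrac a2)_n(b)_n(c)_n(d)_n(e)_n(-N)_n}{n!\,(\tfrac a2)_n(1+a-b)_n(1+a-c)_n(1+a-d)_n(1+a-e)_n(1+a+N)_n}\,R(n).$$ (i) If $Q(n)=Q_k^{(2)}(n;-a-2N;d-a-N,e-a-N)$, then $$L_Q=\frac{1}{Q(N)}\,\frac{(1+a)_N(1-k+a-d-e)_N}{(1+a-d)_N(1+a-e)_N}\;{}_4F_3\!\left[\begin{matrix}1+a-b-c,\ d,\ e,\ -N\\ 1+a-b,\ 1+a-c,\ k-a+d+e-N\end{matrix}\,\Big|\,1\right].$$ (ii) If $Q(n)=Q_k^{(2)}(n;-a-2N;d-a-N,e-a-N,f-a-N)$, then $$L_Q=\frac{1}{Q(N)}\,\frac{(1+a)_N(1-k+a-d-e)_N(1-k+a-f)_N}{(1+a-d)_N(1+a-e)_N(1+a-f)_N}\;{}_5F_4\!\left[\begin{matrix}1+a-b-c,\ d,\ e,\ 1+a-f,\ -N\\ 1+a-b,\ 1+a-c,\ k-a+d+e-N,\ 1-k+a-f\end{matrix}\,\Big|\,1\right].$$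
   Context: $(c)_n$ denotes the Pochhammer symbol, $(c)_0=1$; ${}_pF_q(1)$ denotes the (terminating) generalized hypergeometric series at argument $1$. The polynomials are $Q_k^{(2)}(n;\alpha;\beta,\gamma)=\sum_{j=0}^k\frac{(-n)_j(n+\alpha)_j(-k)_j}{j!(\beta)_j(\gamma)_j}$ and $Q_k^{(2)}(n;\alpha;\beta,\gamma,\delta)=\sum_{j=0}^k\frac{(-n)_j(n+\alpha)_j(-k)_j(k-1-\alpha+\beta+\gamma+\delta)_j}{j!(\beta)_j(\gamma)_j(\delta)_j}$. Parameters are generic so that no lower parameter is a nonpositive integer (among the first $N$ Pochhammer factors) and no denominator vanishes. *)

(* Defs.v *)
From HB Require Import structures.
From mathcomp Require Import all_boot all_order all_algebra.
Set Implicit Arguments. Unset Strict Implicit. Unset Printing Implicit Defensive.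
Import Order.TTheory GRing.Theory Num.Theory.
Local Open Scope ring_scope.

Definition poch (R : ringType) (x : R) (n : nat) : R :=
  \prod_(i < n) (x + i%:R).

Definition Q2 (R : fieldType) (k : nat) (n al be ga : R) : R :=
  \sum_(j < k.+1)
    (poch (- n) j * poch (n + al) j * poch (- k%:R) j)
    / (j`!%:R * poch be j * poch ga j).

Definition Q3 (R : fieldType) (k : nat) (n al be ga de : R) : R :=
  \sum_(j < k.+1)
    (poch (- n) j * poch (n + al) j * poch (- k%:R) j
       * poch (k%:R - 1 - al + be + ga + de) j)
    / (j`!%:R * poch be j * poch ga j * poch de j).

(* Terminating hypergeometric series at argument 1, summed over j = 0..M.
   Used only with an upper parameter -M, so this is the full series. *)
Definition hypF (R : fieldType) (M : nat) (us ds : seq R) : R :=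
  \sum_(j < M.+1)
    (\prod_(u <- us) poch u j) / (j`!%:R * \prod_(v <- ds) poch v j).

Definition LQ (R : fieldType) (N : nat) (a b c d e : R) (Q : R -> R) : R :=
  \sum_(n < N.+1)
    (poch a n * poch (1 + a / 2%:R) n * poch b n * poch c n * poch d n
       * poch e n * poch (- N%:R) n)
    / (n`!%:R * poch (a / 2%:R) n * poch (1 + a - b) n * poch (1 + a - c) n
       * poch (1 + a - d) n * poch (1 + a - e) n * poch (1 + a + N%:R) n)
    * (Q (N%:R - n%:R) / Q N%:R).

(* Main.v *)
Require Import Defs.
From HB Require Import structures.
From mathcomp Require Import all_boot all_order all_algebra.
From mathcomp Require Import ring lra zify.
Set Implicit Arguments. Unset Strict Implicit. Unset Printing Implicit Defensive.
Import Order.TTheory GRing.Theory Num.Theory.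
Local Open Scope ring_scope.

Lemma poch0 (C : fieldType) (x : C) : poch x 0 = 1.
Proof. by rewrite /poch big_ord0. Qed.

Lemma pochS (C : fieldType) (x : C) n : poch x n.+1 = poch x n * (x + n%:R).
Proof. by rewrite /poch big_ord_recr. Qed.

Lemma pochSl (C : fieldType) (x : C) n : poch x n.+1 = x * poch (x + 1) n.
Proof.
rewrite /poch big_ord_recl /= addr0; congr (_ * _); apply: eq_bigr => i _.
rewrite /bump /= add1n -natr1; ring.
Qed.

Lemma pochD (C : fieldType) (x : C) m n :
  poch x (m + n) = poch x m * poch (x + m%:R) n.
Proof.
elim: n => [|n IH]; first by rewrite addn0 poch0 mulr1.
by rewrite addnS !pochS IH natrD addrA mulrA.
Qed.

Lemma poch_negnat (C : fieldType) (n j : nat) :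
  (n < j)%N -> poch (- n%:R : C) j = 0.
Proof.
move=> H; rewrite -(subnKC H) pochD pochS addNr mulr0 mul0r //.
Qed.

Lemma poch_refl (C : fieldType) (x : C) n :
  poch x n = (-1) ^+ n * poch (1 - x - n%:R) n.
Proof.
elim: n x => [|n IH] x; first by rewrite !poch0 expr0 mul1r.
rewrite pochS IH pochSl exprS.
have -> : 1 - x - n.+1%:R + 1 = 1 - x - n%:R by rewrite -natr1; ring.
rewrite -natr1; ring.
Qed.

Lemma poch_neq0_le (C : fieldType) (x : C) m n :
  (m <= n)%N -> poch x n != 0 -> poch x m != 0.
Proof.
move=> H; rewrite -(subnKC H) pochD mulf_eq0 negb_or => /andP[] //.
Qed.

Lemma poch_neq0_shift (C : fieldType) (x : C) m n :
  (m <= n)%N -> poch x n != 0 -> poch (x + m%:R) (n - m) != 0.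
Proof.
move=> H; have := subnKC H; set k := (n - m)%N => <-; rewrite pochD mulf_eq0 negb_or => /andP[] //.
Qed.

Lemma poch_nat_fact (C : fieldType) (n : nat) :
  poch (- n%:R : C) n = (-1) ^+ n * n`!%:R.
Proof.
rewrite poch_refl; congr (_ * _).
have -> : 1 - (- n%:R) - n%:R = 1 :> C by ring.
elim: n => [|n IH]; first by rewrite poch0.
by rewrite pochS IH factS natrM -natr1 mulrC addrC.
Qed.

Definition phi (C : fieldType) (a : C) (i p : nat) : C :=
  poch (- p%:R) i * poch (p%:R + a) i.

Lemma phi0 (C : fieldType) (a : C) p : phi a 0 p = 1.
Proof. by rewrite /phi !poch0 mulr1. Qed.

Lemma phi_vanish (C : fieldType) (a : C) l p : (p < l)%N -> phi a l p = 0.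
Proof. by move=> H; rewrite /phi poch_negnat // mul0r. Qed.

Lemma phi_diff (C : fieldType) (a : C) l p :
  phi a l.+1 p.+1 = phi a l.+1 p - l.+1%:R * (a + 2%:R * p%:R + 1) * phi (a + 1) l p.
Proof.
rewrite /phi pochSl [poch (- p%:R) _]pochS pochS [poch (p%:R + a) _]pochSl.
rewrite (_ : - p.+1%:R + 1 = - p%:R :> C); last by rewrite -natr1; ring.
rewrite (_ : p.+1%:R + a = p%:R + (a + 1) :> C); last by rewrite -natr1; ring.
rewrite (_ : p%:R + a + 1 = p%:R + (a + 1) :> C); last by ring.
rewrite -!natr1; ring.
Qed.

Lemma natr_fact_neq0 (C : numFieldType) n : (n`!%:R : C) != 0.
Proof. by rewrite pnatr_eq0 -lt0n fact_gt0. Qed.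

Lemma natr_S_neq0 (C : numFieldType) n : (n.+1%:R : C) != 0.
Proof. by rewrite pnatr_eq0. Qed.

Lemma nat1_neq0 (C : numFieldType) n : (1 + n%:R : C) != 0.
Proof. by rewrite addrC natr1 natr_S_neq0. Qed.

Lemma natr1_neq0 (C : numFieldType) n : (n%:R + 1 : C) != 0.
Proof. by rewrite natr1 natr_S_neq0. Qed.

Lemma saal (C : numFieldType) p (a B D s : C) : s = B + D - 1 - a ->
  poch (1 + a - B) p * poch (1 + a - D) p =
  \sum_(l < p.+1) poch s l / l`!%:R * phi a l p * poch (B + l%:R) (p - l)
                   * poch (D + l%:R) (p - l).
Proof.
elim: p a B D s => [|p IH] a B D s Hs.
  by rewrite big_ord1 /= !poch0 phi0 divr1 !mulr1.
have IH0 := IH a B D s Hs.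
have Hs1 : s + 1 = (B + 1) + (D + 1) - 1 - (a + 1) by rewrite Hs; ring.
have IH1 := IH (a + 1) (B + 1) (D + 1) (s + 1) Hs1.
have eq1 : 1 + (a + 1) - (B + 1) = 1 + a - B by ring.
rewrite eq1 in IH1.
have eq2 : 1 + (a + 1) - (D + 1) = 1 + a - D by ring.
rewrite eq2 in IH1.
rewrite big_ord_recl /= phi0 poch0 subn0 !addr0 fact0 divr1 !mul1r.
under eq_bigr => i _ do rewrite /bump /= add1n subSS phi_diff.
pose X (i : nat) := poch s i.+1 / i.+1`!%:R * phi a i.+1 p
   * poch (B + i.+1%:R) (p - i) * poch (D + i.+1%:R) (p - i).
pose Y (i : nat) := poch (s + 1) i / i`!%:R * phi (a + 1) i p
   * poch (B + 1 + i%:R) (p - i) * poch (D + 1 + i%:R) (p - i).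
rewrite (eq_bigr (fun i : 'I_p.+1 => X i - (a + 2%:R * p%:R + 1) * s * Y i)); last first.
  move=> i _; rewrite /X /Y pochSl factS natrM.
  rewrite (_ : B + 1 + i%:R = B + i.+1%:R); last by rewrite -natr1; ring.
  rewrite (_ : D + 1 + i%:R = D + i.+1%:R); last by rewrite -natr1; ring.
  have h1 := natr_S_neq0 C i; have h2 := natr_fact_neq0 C i.
  by field; rewrite h2 ?(addrC 1) natr1 h1.
rewrite sumrB -mulr_sumr -IH1.
rewrite big_ord_recr /= /X phi_vanish // mulr0 !mul0r addr0.
rewrite big_ord_recl /= phi0 poch0 subn0 !addr0 fact0 divr1 !mul1r in IH0.
have EX : \sum_(i < p) X i = (B + p%:R) * (D + p%:R) *
   \sum_(i < p) (poch s i.+1 / (i.+1)`!%:R * phi a i.+1 p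
       * poch (B + i.+1%:R) (p - i.+1) * poch (D + i.+1%:R) (p - i.+1)).
  rewrite mulr_sumr; apply: eq_bigr => i _; rewrite /X.
  have Hi := ltn_ord i.
  rewrite -(subnSK Hi) !pochS.
  rewrite -!addrA -!natrD subnKC //.
  ring.
rewrite EX.
have -> : \sum_(i < p) (poch s i.+1 / (i.+1)`!%:R * phi a i.+1 p
       * poch (B + i.+1%:R) (p - i.+1) * poch (D + i.+1%:R) (p - i.+1))
   = poch (1 + a - B) p * poch (1 + a - D) p - poch B p * poch D p.
  by rewrite IH0 addrAC subrr add0r.
rewrite !pochS Hs; ring.
Qed.

Lemma poch_negS (C : fieldType) (k i : nat) :
  poch (- k.+1%:R : C) i.+1 = poch (- k%:R) i.+1 - i.+1%:R * poch (- k%:R) i.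
Proof.
rewrite pochSl pochS.
rewrite (_ : - k.+1%:R + 1 = - k%:R :> C); last by rewrite -natr1; ring.
rewrite -!natr1; ring.
Qed.

Lemma vdm (C : numFieldType) (k : nat) (x : C) (M K : nat) : (k <= K)%N ->
  \sum_(j < K.+1) poch (- k%:R) j * poch (- M%:R) j * (-1) ^+ j * poch x (M - j)
     / j`!%:R = poch (x - k%:R) M.
Proof.
elim: k M K => [|k IH] M K HK.
  rewrite big_ord_recl big1 /= ?poch0 ?expr0 ?subr0 ?subn0 ?fact0 ?divr1 ?mul1r ?addr0 //.
  by move=> i _; rewrite poch_negnat // !mul0r.
case: K HK => [//|K] HK.
rewrite big_ord_recl /= !poch0 expr0 subn0 fact0 divr1 !mul1r.
have E : forall i : 'I_K.+1,
   poch (- k.+1%:R) (bump 0 i) * poch (- M%:R) (bump 0 i) * (-1) ^+ (bump 0 i)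
     * poch x (M - bump 0 i) / (bump 0 i)`!%:R =
   poch (- k%:R) i.+1 * poch (- M%:R) i.+1 * (-1) ^+ i.+1 * poch x (M - i.+1)
     / i.+1`!%:R
   - M%:R * (poch (- k%:R) i * poch (- (M.-1)%:R) i * (-1) ^+ i * poch x (M.-1 - i)
     / i`!%:R).
  move=> i; rewrite /bump /= add1n poch_negS.
  case: M => [|M].
    rewrite [poch (- 0%:R) i.+1]poch_negnat //; ring.
  rewrite [poch (- M.+1%:R) i.+1]pochSl /= subSS.
  rewrite (_ : - M.+1%:R + 1 = - M%:R :> C); last by rewrite -natr1; ring.
  rewrite factS natrM.
  have h1 := natr_S_neq0 C i; have h2 := natr_fact_neq0 C i.
  rewrite exprS -!natr1; field.
  by rewrite h2 ?(addrC 1) natr1 h1.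
rewrite (eq_bigr _ (fun i _ => E i)) sumrB -mulr_sumr.
rewrite (IH M.-1 K) //.
have HH : \sum_(i < K.+1) poch (- k%:R) i.+1 * poch (- M%:R) i.+1 * (-1) ^+ i.+1
     * poch x (M - i.+1) / i.+1`!%:R = poch (x - k%:R) M - poch x M.
  rewrite -(IH M K.+1 (leqW HK)) [X in _ = X - _]big_ord_recl !poch0 expr0 subn0 fact0 divr1 !mul1r.
  by rewrite addrAC subrr add0r.
rewrite HH; clear E HH.
case: M => [|M] /=.
  by rewrite !poch0; ring.
rewrite [poch (x - k.+1%:R) _]pochSl.
rewrite (_ : x - k.+1%:R + 1 = x - k%:R :> C); last by rewrite -natr1; ring.
rewrite [poch (x - k%:R) M.+1]pochS -!natr1; ring.
Qed.

Lemma saal2 (C : numFieldType) (k : nat) (x dl : C) (M K : nat) :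
  poch dl k != 0 -> (k <= K)%N ->
  (\sum_(j < K.+1) phi (dl - x) j k * poch (- M%:R) j * (-1) ^+ j * poch x (M - j)
     / (j`!%:R * poch dl j)) * poch (1 - dl - M%:R) M
  = poch (x - k%:R) M * poch (1 - k%:R - dl - M%:R) M.
Proof.
elim: k dl M K => [|k IH] dl M K Hdl HK.
  rewrite big_ord_recl big1 /= ?phi0 ?poch0 ?expr0 ?subr0 ?subn0 ?fact0 ?mul1r ?divr1 ?addr0 //.
  by move=> i _; rewrite phi_vanish // !mul0r.
case: K HK => [//|K] HK.
have Hdl0 : dl != 0 by move: Hdl; rewrite pochSl mulf_eq0 negb_or => /andP[].
have Hdl1 : poch (dl + 1) k != 0 by move: Hdl; rewrite pochSl mulf_eq0 negb_or => /andP[].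
have Hdlk : poch dl k != 0 by move: Hdl; rewrite pochS mulf_eq0 negb_or => /andP[].
rewrite big_ord_recl /= phi0 !poch0 expr0 subn0 fact0 !mul1r.
have E : forall i : 'I_K.+1,
   phi (dl - x) (bump 0 i) k.+1 * poch (- M%:R) (bump 0 i) * (-1) ^+ (bump 0 i)
     * poch x (M - bump 0 i) / ((bump 0 i)`!%:R * poch dl (bump 0 i)) =
   phi (dl - x) i.+1 k * poch (- M%:R) i.+1 * (-1) ^+ i.+1 * poch x (M - i.+1)
     / (i.+1`!%:R * poch dl i.+1)
   - (dl - x + 2%:R * k%:R + 1) * (M%:R / dl) *
     (phi (dl + 1 - x) i k * poch (- (M.-1)%:R) i * (-1) ^+ i * poch x (M.-1 - i)
     / (i`!%:R * poch (dl + 1) i)).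
  move=> i; rewrite /bump /= add1n.
  case: (ltnP k i) => Hki.
    by rewrite !phi_vanish // ?mul0r ?mulr0 ?subr0 // ltnS ltnW.
  rewrite phi_diff.
  rewrite (_ : dl - x + 1 = dl + 1 - x); last by ring.
  case: M => [|M].
    rewrite [poch (- 0%:R) i.+1]poch_negnat //; ring.
  rewrite [poch (- M.+1%:R) i.+1]pochSl /= subSS [poch dl i.+1]pochSl.
  rewrite (_ : - M.+1%:R + 1 = - M%:R :> C); last by rewrite -natr1; ring.
  rewrite factS natrM.
  have h1 := natr_S_neq0 C i; have h2 := natr_fact_neq0 C i.
  have h3 : poch (dl + 1) i != 0 by exact: poch_neq0_le Hdl1.
  rewrite exprS -!natr1; field.
  by rewrite h2 h3 Hdl0 ?(addrC 1) natr1 h1.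
rewrite (eq_bigr _ (fun i _ => E i)) sumrB -mulr_sumr.
have HH : \sum_(i < K.+1) phi (dl - x) i.+1 k * poch (- M%:R) i.+1 * (-1) ^+ i.+1
     * poch x (M - i.+1) / (i.+1`!%:R * poch dl i.+1) =
   (\sum_(j < K.+2) phi (dl - x) j k * poch (- M%:R) j * (-1) ^+ j * poch x (M - j)
     / (j`!%:R * poch dl j)) - poch x M.
  rewrite [X in _ = X - _]big_ord_recl /= phi0 !poch0 expr0 subn0 fact0 !mul1r.
  by rewrite invr1 mulr1 addrAC subrr add0r.
rewrite HH; clear E HH.
have e : forall u v w : C, u / 1 + (v - u - w) = v - w by move=> u v w; rewrite divr1; ring.
rewrite e mulrBl (IH dl M K.+1 Hdlk (leqW HK)).
case: M => [|M] /=.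
  by rewrite mul0r mulr0 !mul0r subr0 !poch0.
have := IH (dl + 1) M K Hdl1 HK.
rewrite (_ : 1 - (dl + 1) - M%:R = 1 - dl - M.+1%:R); last by rewrite -natr1; ring.
rewrite (_ : 1 - k%:R - (dl + 1) - M%:R = 1 - k%:R - dl - M.+1%:R); last by rewrite -!natr1; ring.
move=> IH1.
rewrite [poch (1 - dl - M.+1%:R) M.+1]pochS.
rewrite (_ : 1 - dl - M.+1%:R + M%:R = - dl); last by rewrite -natr1; ring.
rewrite (_ : forall u v w : C, u * v * (w * - dl) = - (u * dl) * (v * w)); last by move=> u v w; ring.
rewrite -[_ * (M.+1%:R / dl) * dl]mulrA mulfVK //.
rewrite IH1.
rewrite [poch (x - k%:R) M.+1]pochS [poch (x - k.+1%:R) M.+1]pochSl.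
rewrite [poch (1 - k%:R - dl - M.+1%:R) M.+1]pochS [poch (1 - k.+1%:R - dl - M.+1%:R) M.+1]pochSl.
rewrite (_ : x - k.+1%:R + 1 = x - k%:R); last by rewrite -natr1; ring.
rewrite (_ : 1 - k.+1%:R - dl - M.+1%:R + 1 = 1 - k%:R - dl - M.+1%:R); last by rewrite -!natr1; ring.
rewrite -!natr1; ring.
Qed.

Definition psi (C : fieldType) (a : C) (N L n : nat) : C :=
  poch (n%:R - N%:R) L * poch (- n%:R - a - N%:R) L.

Definition vw (C : fieldType) (a : C) (N n : nat) : C :=
  poch a n * poch (1 + a / 2%:R) n * poch (- N%:R) n
  / (n`!%:R * poch (a / 2%:R) n * poch (1 + a + N%:R) n).

Definition up (C : fieldType) (a : C) (N n : nat) : C :=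
  poch a n * poch (- N%:R) n / (a * n`!%:R * poch (1 + a + N%:R) n).

Lemma poch_shift1 (C : fieldType) (x : C) i :
  poch x i * (x + i%:R) = x * poch (x + 1) i.
Proof. by rewrite -pochS pochSl. Qed.

Lemma phi_R1 (C : fieldType) (a : C) i n :
  phi a i n.+1 * ((i%:R - n.+1%:R) * (n%:R + a))
  = - (n.+1%:R * (n%:R + a + i%:R)) * phi a i n.
Proof.
rewrite /phi.
have h1 := poch_shift1 (- n.+1%:R : C) i.
have e_h1 : - n.+1%:R + 1 = - n%:R :> C by rewrite -natr1; ring.
rewrite e_h1 in h1.
have h2 := poch_shift1 (n%:R + a : C) i.
have e_h2 : n%:R + a + 1 = n.+1%:R + a :> C by rewrite -natr1; ring.
rewrite e_h2 in h2.
rewrite (_ : forall A B : C, A * B * ((i%:R - n.+1%:R) * (n%:R + a))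
   = (A * (- n.+1%:R + i%:R)) * ((n%:R + a) * B)); last first.
  move=> A B; rewrite -natr1; ring.
rewrite h1 -h2; ring.
Qed.

Lemma psi_R2 (C : fieldType) (a : C) N L n :
  psi a N L n.+1 * ((n%:R - N%:R) * (n.+1%:R + a + N%:R - L%:R))
  = psi a N L n * ((n%:R + L%:R - N%:R) * (n.+1%:R + a + N%:R)).
Proof.
rewrite /psi.
have h1 := poch_shift1 (n%:R - N%:R : C) L.
have e_h1 : n%:R - N%:R + 1 = n.+1%:R - N%:R :> C by rewrite -natr1; ring.
rewrite e_h1 in h1.
have h2 := poch_shift1 (- n.+1%:R - a - N%:R : C) L.
have e_h2 : - n.+1%:R - a - N%:R + 1 = - n%:R - a - N%:R :> C by rewrite -natr1; ring.
rewrite e_h2 in h2.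
rewrite (_ : forall A B : C, A * B * ((n%:R - N%:R) * (n.+1%:R + a + N%:R - L%:R))
   = - (((n%:R - N%:R) * A) * (B * (- n.+1%:R - a - N%:R + L%:R)))); last first.
  move=> A B; rewrite -natr1; ring.
rewrite -h1 h2; rewrite -natr1; ring.
Qed.

Lemma half_neq0 (C : numFieldType) (a : C) N : (0 < N)%N ->
  poch (a / 2%:R) N != 0 -> a != 0.
Proof.
case: N => // N _; rewrite pochSl mulf_eq0 negb_or => /andP[h _].
by apply: contraNneq h => ->; rewrite mul0r.
Qed.

Lemma vw_up (C : numFieldType) (a : C) N n : a != 0 -> poch (a / 2%:R) n != 0 ->
  vw a N n = up a N n * (a + 2%:R * n%:R).
Proof.
move=> Ha Hn; rewrite /vw /up.
have h2 : (2%:R : C) != 0 by rewrite pnatr_eq0.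
have := poch_shift1 (a / 2%:R) n.
rewrite (_ : a / 2%:R + 1 = 1 + a / 2%:R); last by ring.
move=> h.
have ha : a / 2%:R != 0 by rewrite mulf_neq0 // invr_eq0.
have -> : poch (1 + a / 2%:R) n = poch (a / 2%:R) n * (a / 2%:R + n%:R) / (a / 2%:R).
  by rewrite h [_ * poch _ _]mulrC mulfK.
have hf := natr_fact_neq0 C n.
rewrite !invfM; move: (poch (1 + a + N%:R) n)^-1 => q.
field.
by rewrite hf Ha Hn.
Qed.

Lemma up_S (C : numFieldType) (a : C) N n : poch (1 + a + N%:R) n.+1 != 0 ->
  up a N n.+1 = up a N n * ((a + n%:R) * (n%:R - N%:R))
                 / (n.+1%:R * (1 + a + N%:R + n%:R)).
Proof.
move=> H; have H' := H; rewrite pochS mulf_eq0 negb_or in H'; case/andP: H' => H1 H2.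
rewrite /up !pochS factS natrM.
have hf := natr_fact_neq0 C n; have hs := natr_S_neq0 C n.
rewrite !invfM; move: a^-1 => q.
field.
by rewrite hf H1 H2 nat1_neq0.
Qed.

Lemma up_N1 (C : numFieldType) (a : C) N : up a N N.+1 = 0.
Proof. by rewrite /up [poch (- N%:R) _]poch_negnat // mulr0 mul0r. Qed.

Lemma biorth_lt (C : numFieldType) (a : C) N i L : a != 0 ->
  poch (a / 2%:R) N != 0 -> poch (1 + a + N%:R) N != 0 -> (i + L < N)%N ->
  \sum_(n < N.+1) vw a N n * phi a i n * psi a N L n = 0.
Proof.
move=> Ha Ha2 HaN HiL.
pose U n := up a N n * phi a i n * psi a N L n
   * ((i%:R - n%:R) * (n%:R + a + N%:R - L%:R)) / (N - i - L)%:R.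
have eNiL : ((N - i - L)%:R : C) = N%:R - i%:R - L%:R.
  rewrite natrB; last by lia.
  by rewrite natrB //; lia.
have hNiL : ((N - i - L)%:R : C) != 0 by rewrite pnatr_eq0; lia.
rewrite -(big_mkord xpredT (fun n => vw a N n * phi a i n * psi a N L n)).
rewrite (@telescope_sumr_eq _ 0 N.+1 U) //.
  rewrite /U up_N1 !mul0r sub0r.
  case: i HiL {U eNiL hNiL} => [|i] HiL.
    by rewrite subrr mul0r mulr0 mul0r oppr0.
  by rewrite phi_vanish // mulr0 !mul0r oppr0.
move=> k /andP[_ Hk]; rewrite ltnS in Hk.
have Hk2 : poch (a / 2%:R) k != 0 by exact: poch_neq0_le Ha2.
rewrite vw_up //.
case: (ltnP k N) => HkN; last first.
  have -> : k = N by apply/eqP; rewrite eqn_leq Hk HkN.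
  rewrite /U up_N1 !mul0r sub0r.
  case: L HiL eNiL hNiL {U} => [|L] HiL eNiL hNiL.
    rewrite /psi !poch0 !mulr1 subr0 eNiL.
    by field; move: hNiL; rewrite eNiL subr0.
  by rewrite /psi subrr [poch 0 _]pochSl !mul0r !mulr0 !mul0r oppr0.
have Hk1 : poch (1 + a + N%:R) k.+1 != 0 by exact: poch_neq0_le HaN.
have Hk1' := Hk1; rewrite pochS mulf_eq0 negb_or in Hk1'; case/andP: Hk1' => _ Hk1'.
rewrite /U up_S //.
rewrite (_ : forall X Y Z W V : C, X * ((a + k%:R) * (k%:R - N%:R)) / W * Y * Z
   * ((i%:R - k.+1%:R) * (k.+1%:R + a + N%:R - L%:R)) / V
   = X / W / V * (Y * ((i%:R - k.+1%:R) * (k%:R + a)))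
     * (Z * ((k%:R - N%:R) * (k.+1%:R + a + N%:R - L%:R)))); last first.
  by move=> X Y Z W V; ring.
rewrite phi_R1 psi_R2 eNiL.
have hs := natr_S_neq0 C k.
by field; rewrite -eNiL hNiL Hk1' nat1_neq0.
Qed.

Lemma psi_zero (C : fieldType) (a : C) N L n : (n <= N)%N -> (N - n < L)%N ->
  psi a N L n = 0.
Proof.
move=> H1 H2; rewrite /psi (_ : n%:R - N%:R = - (N - n)%:R :> C).
  by rewrite poch_negnat // mul0r.
by rewrite natrB // opprB.
Qed.

Lemma biorth_val (C : numFieldType) (a : C) N i : (i <= N)%N ->
  poch (a / 2%:R) N != 0 -> poch (1 + a + N%:R) N != 0 ->
  vw a N i * phi a i i * psi a N (N - i) i
  = (-1) ^+ i * poch (- N%:R) i * poch (1 + a) N * (N - i)`!%:R.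
Proof.
move=> HiN Ha2 HaN.
case: N HiN Ha2 HaN => [|N] HiN Ha2 HaN.
  move: HiN; rewrite leqn0 => /eqP ->.
  by rewrite /vw /psi phi0 !poch0 fact0 !mulr1 !mul1r invr1.
have Ha : a != 0 by apply: (half_neq0 (N := N.+1)).
rewrite vw_up //; last by exact: poch_neq0_le Ha2.
have E1 : poch a (N.+2 + i) = poch a i * poch (i%:R + a) i * (a + 2%:R * i%:R)
     * poch (1 + a + 2%:R * i%:R) (N.+1 - i).
  rewrite (_ : (N.+2 + i = (i + i).+1 + (N.+1 - i))%N); last by lia.
  rewrite pochD pochS pochD.
  rewrite (_ : a + (i + i)%:R = a + 2%:R * i%:R); last by rewrite natrD; ring.
  rewrite (_ : a + (i + i).+1%:R = 1 + a + 2%:R * i%:R); last by rewrite -natr1 natrD; ring.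
  by rewrite (addrC a).
have E2 : poch a (N.+2 + i) = a * poch (1 + a) N.+1 * poch (1 + a + N.+1%:R) i.
  rewrite pochD pochSl (addrC a).
  by rewrite (_ : a + N.+2%:R = 1 + a + N.+1%:R) // -[N.+2%:R]natr1; ring.
have key : poch a i * poch (i%:R + a) i * (a + 2%:R * i%:R)
     * poch (1 + a + 2%:R * i%:R) (N.+1 - i) = a * poch (1 + a) N.+1 * poch (1 + a + N.+1%:R) i.
  by rewrite -E1 E2.
rewrite /up /phi /psi poch_nat_fact.
rewrite (_ : i%:R - N.+1%:R = - (N.+1 - i)%:R :> C); last by rewrite natrB // opprB.
rewrite poch_nat_fact [poch (- i%:R - a - N.+1%:R) _]poch_refl.
rewrite (_ : 1 - (- i%:R - a - N.+1%:R) - (N.+1 - i)%:R = 1 + a + 2%:R * i%:R :> C); last first.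
  by rewrite natrB //; ring.
set s := (-1) ^+ (N.+1 - i).
have sg : s * s = 1 by rewrite /s -expr2 sqrr_sign.
have hP : poch (1 + a + N.+1%:R) i != 0 by exact: poch_neq0_le HaN.
have hf := natr_fact_neq0 C i.
rewrite (_ : forall X Y : C, poch a i * poch (- N.+1%:R) i / (a * i`!%:R * poch (1 + a + N.+1%:R) i)
  * (a + 2%:R * i%:R) * ((-1) ^+ i * i`!%:R * poch (i%:R + a) i) * (s * X * (s * Y))
  = (s * s) * poch (- N.+1%:R) i / (a * i`!%:R * poch (1 + a + N.+1%:R) i) * ((-1) ^+ i * i`!%:R)
    * X * (poch a i * poch (i%:R + a) i * (a + 2%:R * i%:R) * Y)); last first.
  by move=> X Y; ring.
rewrite key sg; field.
by rewrite Ha hf hP.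
Qed.

Lemma biorth (C : numFieldType) (a : C) N i L :
  poch (a / 2%:R) N != 0 -> poch (1 + a + N%:R) N != 0 ->
  \sum_(n < N.+1) vw a N n * phi a i n * psi a N L n =
  if (i + L == N)%N then (-1) ^+ i * poch (- N%:R) i * poch (1 + a) N * (N - i)`!%:R
  else 0.
Proof.
move=> Ha2 HaN.
case: (ltngtP (i + L) N) => H.
- have Ha : a != 0 by apply: (half_neq0 (N := N)) => //; lia.
  exact: biorth_lt.
- apply: big1 => n _.
  case: (ltnP n i) => Hn; first by rewrite phi_vanish // mulr0 mul0r.
  rewrite psi_zero ?mulr0 //; first by rewrite -ltnS.
  have := ltn_ord n; lia.
- have HiN : (i < N.+1)%N by lia.
  rewrite (bigD1 (Ordinal HiN)) //= big1 ?addr0.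
    rewrite (_ : L = N - i)%N; last by lia.
    exact: biorth_val.
  move=> n Hn.
  have Hn' : nat_of_ord n != i by move: Hn; apply: contra => /eqP Hn; apply/eqP/val_inj.
  case: (ltnP n i) => Hni; first by rewrite phi_vanish // mulr0 mul0r.
  rewrite psi_zero ?mulr0 //; first by rewrite -ltnS.
  have := ltn_ord n; move: Hn' Hni; lia.
Qed.

Lemma poch_refl2 (C : fieldType) (x y : C) n :
  poch x n * poch y n = poch (1 - x - n%:R) n * poch (1 - y - n%:R) n.
Proof.
rewrite [poch x n]poch_refl [poch y n]poch_refl mulrACA -expr2 sqrr_sign mul1r //.
Qed.

Lemma saal_psi (C : numFieldType) (a d e : C) M m : (m <= M)%N ->
  poch d m * poch e m * (poch (1 + a - d + m%:R) (M - m) * poch (1 + a - e + m%:R) (M - m))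
  = \sum_(l < (M - m).+1) poch (1 + a - d - e) l / l`!%:R * poch d (M - l) * poch e (M - l)
      * psi a M l m.
Proof.
move=> Hm.
have Hs : 1 + a - d - e = (1 - d - M%:R) + (1 - e - M%:R) - 1 - (- a - 2%:R * M%:R) by ring.
have S := @saal C (M - m) (- a - 2%:R * M%:R) (1 - d - M%:R) (1 - e - M%:R) (1 + a - d - e) Hs.
have eq3 : 1 + (- a - 2%:R * M%:R) - (1 - d - M%:R) = d - a - M%:R by ring.
rewrite eq3 in S.
have eq4 : 1 + (- a - 2%:R * M%:R) - (1 - e - M%:R) = e - a - M%:R by ring.
rewrite eq4 in S.
rewrite poch_refl2 in S.
have eq5 : 1 - (d - a - M%:R) - (M - m)%:R = 1 + a - d + m%:R by rewrite natrB //; ring.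
rewrite eq5 in S.
have eq6 : 1 - (e - a - M%:R) - (M - m)%:R = 1 + a - e + m%:R by rewrite natrB //; ring.
rewrite eq6 in S.
rewrite S mulr_sumr; apply: eq_bigr => l _.
have Hl : (l <= M - m)%N by rewrite -ltnS.
rewrite (_ : (M - l = m + (M - m - l))%N); last by lia.
rewrite !pochD.
have P := poch_refl2 (d + m%:R) (e + m%:R) (M - m - l).
have eqa : 1 - (d + m%:R) - (M - m - l)%:R = 1 - d - M%:R + l%:R.
  by rewrite natrB // natrB //; ring.
have eqb : 1 - (e + m%:R) - (M - m - l)%:R = 1 - e - M%:R + l%:R.
  by rewrite natrB // natrB //; ring.
rewrite eqa eqb in P.
have Ep : phi (- a - 2%:R * M%:R) l (M - m) = psi a M l m.
  rewrite /phi /psi natrB //.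
  rewrite (_ : - (M%:R - m%:R) = m%:R - M%:R :> C); last by ring.
  by rewrite (_ : M%:R - m%:R + (- a - 2%:R * M%:R) = - m%:R - a - M%:R :> C); last by ring.
rewrite Ep.
rewrite (_ : forall X Y Z W V : C, X * Y * (Z * W * V) = Z * W * V * X * Y); last first.
  by move=> X Y Z W V; ring.
rewrite -[_ * poch (1 - d - M%:R + l%:R) (M - m - l) * poch (1 - e - M%:R + l%:R) (M - m - l)]mulrA.
by rewrite -P; ring.
Qed.

Lemma sum_widen (C : numFieldType) (F : nat -> C) n m : (n <= m)%N ->
  (forall i, (n <= i)%N -> (i < m)%N -> F i = 0) ->
  \sum_(i < m) F i = \sum_(i < n) F i.
Proof.
move=> H Hz; rewrite (big_ord_widen m F H) [RHS]big_mkcond; apply: eq_bigr => i _.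
case: ifP => // /negbT; rewrite -leqNgt => h; exact: Hz.
Qed.

Lemma psi_mul (C : fieldType) (a : C) N j l n : (j <= N)%N ->
  psi a N j n * psi a (N - j) l n = psi a N (j + l) n.
Proof.
move=> H; rewrite /psi !pochD natrB //.
rewrite (_ : n%:R - N%:R + j%:R = n%:R - (N%:R - j%:R) :> C); last by ring.
rewrite (_ : - n%:R - a - N%:R + j%:R = - n%:R - a - (N%:R - j%:R) :> C); last by ring.
ring.
Qed.

Definition gde (C : fieldType) (a d e : C) n :=
  poch d n * poch e n / (poch (1 + a - d) n * poch (1 + a - e) n).

Lemma gpsi (C : numFieldType) (a d e : C) N j n : (j <= N)%N -> (n <= N)%N ->
  poch (1 + a - d) N != 0 -> poch (1 + a - e) N != 0 ->
  gde a d e n * psi a N j n =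
  \sum_(l < (N - j).+1) poch (1 + a - d - e) l / l`!%:R * poch d (N - j - l)
     * poch e (N - j - l) * psi a N (j + l) n
     / (poch (1 + a - d) (N - j) * poch (1 + a - e) (N - j)).
Proof.
move=> HjN HnN Hd He.
case: (leqP n (N - j)) => Hn; last first.
  rewrite psi_zero; last by lia. 2: by [].
  rewrite mulr0 big1 // => l _; rewrite psi_zero ?mulr0 ?mul0r //; lia.
rewrite (@sum_widen _ (fun l => poch (1 + a - d - e) l / l`!%:R * poch d (N - j - l)
     * poch e (N - j - l) * psi a N (j + l) n
     / (poch (1 + a - d) (N - j) * poch (1 + a - e) (N - j))) (N - j - n).+1); last first.
- by move=> l Hl1 Hl2; rewrite psi_zero ?mulr0 ?mul0r //; lia.
- by lia.
have S := saal_psi a d e Hn.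
have Hdn : poch (1 + a - d) n != 0 by apply: poch_neq0_le Hd; lia.
have Hen : poch (1 + a - e) n != 0 by apply: poch_neq0_le He; lia.
have Hdn' : poch (1 + a - d + n%:R) (N - j - n) != 0.
  have := poch_neq0_shift (x := 1 + a - d) (m := n) (n := N - j).
  by apply => //; apply: poch_neq0_le Hd; lia.
have Hen' : poch (1 + a - e + n%:R) (N - j - n) != 0.
  have := poch_neq0_shift (x := 1 + a - e) (m := n) (n := N - j).
  by apply => //; apply: poch_neq0_le He; lia.
rewrite (eq_bigr (fun l : 'I_(N - j - n).+1 => psi a N j n
   / (poch (1 + a - d) (N - j) * poch (1 + a - e) (N - j)) *
   (poch (1 + a - d - e) l / l`!%:R * poch d (N - j - l) * poch e (N - j - l)
    * psi a (N - j) l n))); last first.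
  by move=> l _; rewrite -psi_mul //; ring.
rewrite -mulr_sumr -S.
have pd : poch (1 + a - d) (N - j) = poch (1 + a - d) n * poch (1 + a - d + n%:R) (N - j - n).
  by rewrite -pochD subnKC.
have pe : poch (1 + a - e) (N - j) = poch (1 + a - e) n * poch (1 + a - e + n%:R) (N - j - n).
  by rewrite -pochD subnKC.
rewrite pd pe /gde.
field.
by rewrite Hdn Hen Hdn' Hen'.
Qed.

Lemma fall_fact (C : numFieldType) M j : (j <= M)%N ->
  (M`!%:R : C) = poch (- M%:R) j * (-1) ^+ j * (M - j)`!%:R.
Proof.
elim: j => [|j IH] H; first by rewrite poch0 expr0 subn0 !mul1r.
rewrite IH ?(ltnW H) // pochS exprS.
rewrite (_ : (M - j = (M - j.+1).+1)%N); last by lia.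
rewrite factS natrM (_ : (M - j.+1).+1%:R = M%:R - j%:R :> C).
  ring.
by rewrite -natr1 natrB //; ring.
Qed.

Lemma Aij (C : numFieldType) (a d e : C) N i j : (i <= N)%N ->
  poch (a / 2%:R) N != 0 -> poch (1 + a + N%:R) N != 0 ->
  poch (1 + a - d) N != 0 -> poch (1 + a - e) N != 0 ->
  \sum_(n < N.+1) vw a N n * phi a i n * (gde a d e n * psi a N j n)
  = (-1) ^+ i * poch (- N%:R) i * poch (1 + a) N * poch d i * poch e i
    * poch (1 + a - d - e) (N - i - j) * poch (- (N - i)%:R) j * (-1) ^+ j
    / (poch (1 + a - d) (N - j) * poch (1 + a - e) (N - j)).
Proof.
move=> HiN Ha2 HaN Hd He.
case: (leqP j (N - i)) => Hj; last first.
  rewrite [poch (- (N - i)%:R) j]poch_negnat // mulr0 !mul0r.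
  apply: big1 => n _.
  case: (ltnP n i) => Hn; first by rewrite phi_vanish // mulr0 mul0r.
  by rewrite psi_zero ?mulr0 //; have := ltn_ord n; lia.
have HjN : (j <= N)%N by lia.
set Den := poch (1 + a - d) (N - j) * poch (1 + a - e) (N - j).
rewrite (eq_bigr (fun n : 'I_N.+1 => \sum_(l < (N - j).+1)
   (poch (1 + a - d - e) l / l`!%:R * poch d (N - j - l) * poch e (N - j - l) / Den)
    * (vw a N n * phi a i n * psi a N (j + l) n))); last first.
  move=> n _; rewrite gpsi // ?mulr_sumr; last by have := ltn_ord n; lia.
  by apply: eq_bigr => l _; rewrite /Den; ring.
rewrite exchange_big /=.
under eq_bigr => l _ do rewrite -mulr_sumr biorth //.
have Hl : (N - i - j < (N - j).+1)%N by lia.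
rewrite (bigD1 (Ordinal Hl)) //= big1 ?addr0; last first.
  move=> l Hl'; case: ifP; last by rewrite mulr0.
  move/eqP => E; exfalso; move: Hl'; apply/negP; rewrite negbK.
  apply/eqP/val_inj => /=; lia.
rewrite (_ : (i + (j + (N - i - j)) == N)%N = true); last by apply/eqP; lia.
rewrite (_ : (N - j - (N - i - j) = i)%N); last by lia.
rewrite (@fall_fact C (N - i) j Hj).
have hf := natr_fact_neq0 C (N - i - j).
have hd : poch (1 + a - d) (N - j) != 0 by apply: poch_neq0_le Hd; lia.
have he : poch (1 + a - e) (N - j) != 0 by apply: poch_neq0_le He; lia.
by rewrite /Den; field; rewrite hd he hf.
Qed.

Lemma gphi (C : numFieldType) (a b c : C) N n : (n <= N)%N ->
  poch (1 + a - b) N != 0 -> poch (1 + a - c) N != 0 ->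
  gde a b c n = \sum_(i < N.+1) poch (1 + a - b - c) i
      / (i`!%:R * poch (1 + a - b) i * poch (1 + a - c) i) * phi a i n.
Proof.
move=> HnN Hb Hc.
rewrite (@sum_widen _ (fun i => poch (1 + a - b - c) i
      / (i`!%:R * poch (1 + a - b) i * poch (1 + a - c) i) * phi a i n) n.+1); last first.
- by move=> i Hi1 Hi2; rewrite phi_vanish ?mulr0.
- by [].
have Hs : 1 + a - b - c = (1 + a - b) + (1 + a - c) - 1 - a by ring.
have S := @saal C n a (1 + a - b) (1 + a - c) (1 + a - b - c) Hs.
have e1 : 1 + a - (1 + a - b) = b by ring.
have e2 : 1 + a - (1 + a - c) = c by ring.
rewrite e1 e2 in S.
have Hbn : poch (1 + a - b) n != 0 by exact: poch_neq0_le Hb.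
have Hcn : poch (1 + a - c) n != 0 by exact: poch_neq0_le Hc.
rewrite /gde S mulr_suml; apply: eq_bigr => i _.
have Hi : (i <= n)%N by rewrite -ltnS.
have pb : poch (1 + a - b) n = poch (1 + a - b) i * poch (1 + a - b + i%:R) (n - i).
  by rewrite -pochD subnKC.
have pc : poch (1 + a - c) n = poch (1 + a - c) i * poch (1 + a - c + i%:R) (n - i).
  by rewrite -pochD subnKC.
have Hbi : poch (1 + a - b + i%:R) (n - i) != 0 by move: Hbn; rewrite pb mulf_eq0 negb_or => /andP[].
have Hci : poch (1 + a - c + i%:R) (n - i) != 0 by move: Hcn; rewrite pc mulf_eq0 negb_or => /andP[].
have Hbi' : poch (1 + a - b) i != 0 by move: Hbn; rewrite pb mulf_eq0 negb_or => /andP[].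
have Hci' : poch (1 + a - c) i != 0 by move: Hcn; rewrite pc mulf_eq0 negb_or => /andP[].
have hf := natr_fact_neq0 C i.
rewrite pb pc; field.
by rewrite Hbi Hci Hbi' Hci' hf.
Qed.

Lemma core (C : numFieldType) (a b c d e : C) N K (cf : nat -> C) :
  poch (a / 2%:R) N != 0 -> poch (1 + a + N%:R) N != 0 ->
  poch (1 + a - b) N != 0 -> poch (1 + a - c) N != 0 ->
  poch (1 + a - d) N != 0 -> poch (1 + a - e) N != 0 ->
  \sum_(n < N.+1) vw a N n * gde a b c n * gde a d e n
      * \sum_(j < K) cf j * psi a N j n
  = \sum_(i < N.+1) poch (1 + a - b - c) i
      / (i`!%:R * poch (1 + a - b) i * poch (1 + a - c) i)
      * \sum_(j < K) cf j *
      ((-1) ^+ i * poch (- N%:R) i * poch (1 + a) N * poch d i * poch e i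
       * poch (1 + a - d - e) (N - i - j) * poch (- (N - i)%:R) j * (-1) ^+ j
       / (poch (1 + a - d) (N - j) * poch (1 + a - e) (N - j))).
Proof.
move=> Ha2 HaN Hb Hc Hd He.
rewrite (eq_bigr (fun n : 'I_N.+1 => \sum_(i < N.+1) \sum_(j < K)
   poch (1 + a - b - c) i / (i`!%:R * poch (1 + a - b) i * poch (1 + a - c) i) * cf j
   * (vw a N n * phi a i n * (gde a d e n * psi a N j n)))); last first.
  move=> n _; rewrite (@gphi _ a b c N n) //; last by rewrite -ltnS.
  rewrite mulr_sumr [RHS]exchange_big; apply: eq_bigr => j _.
  rewrite mulr_sumr !mulr_suml; apply: eq_bigr => i _; ring.
rewrite exchange_big; apply: eq_bigr => i _.
rewrite exchange_big mulr_sumr; apply: eq_bigr => j _.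
rewrite -mulr_sumr Aij //; last by rewrite -ltnS.
ring.
Qed.

Lemma W_split (C : numFieldType) (a b c d e : C) N n :
  poch a n * poch (1 + a / 2%:R) n * poch b n * poch c n * poch d n
       * poch e n * poch (- N%:R) n
    / (n`!%:R * poch (a / 2%:R) n * poch (1 + a - b) n * poch (1 + a - c) n
       * poch (1 + a - d) n * poch (1 + a - e) n * poch (1 + a + N%:R) n)
  = vw a N n * gde a b c n * gde a d e n.
Proof. by rewrite /vw /gde !invfM; ring. Qed.

Lemma beta_rel (C : fieldType) (a d : C) N j : (j <= N)%N ->
  poch (d - a - N%:R) j * poch (1 + a - d) (N - j) = (-1) ^+ j * poch (1 + a - d) N.
Proof.
move=> H; rewrite poch_refl -mulrA; congr (_ * _).
rewrite -{3}(subnK H) pochD mulrC; congr (_ * _).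
congr (poch _ _); rewrite natrB //; ring.
Qed.

Lemma beta_rel2 (C : fieldType) (a d e : C) N j : (j <= N)%N ->
  poch (d - a - N%:R) j * poch (e - a - N%:R) j
  * (poch (1 + a - d) (N - j) * poch (1 + a - e) (N - j))
  = poch (1 + a - d) N * poch (1 + a - e) N.
Proof.
move=> H; rewrite mulrACA !beta_rel // mulrACA -expr2 sqrr_sign mul1r //.
Qed.

Lemma tail_rel (C : fieldType) (y : C) N i : (i <= N)%N ->
  poch y (N - i) * ((-1) ^+ i * poch (1 - y - N%:R) i) = poch y N.
Proof.
move=> H.
rewrite [poch (1 - y - N%:R) i]poch_refl mulrA -expr2 sqrr_sign mul1r.
rewrite -{3}(subnK H) pochD; congr (_ * poch _ _).
rewrite natrB //; ring.
Qed.

Lemma part1 (C : numClosedFieldType) (k N : nat) (a b c d e : C)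
  (Ha2 : poch (a / 2%:R) N != 0)
  (Hb : poch (1 + a - b) N != 0) (Hc : poch (1 + a - c) N != 0)
  (Hd : poch (1 + a - d) N != 0) (He : poch (1 + a - e) N != 0)
  (HaN : poch (1 + a + N%:R) N != 0)
  (Hbe : poch (d - a - N%:R) k != 0) (Hga : poch (e - a - N%:R) k != 0)
  (Hde : poch (k%:R - a + d + e - N%:R) N != 0) :
  (let Q := fun n => Q2 k n (- a - 2%:R * N%:R) (d - a - N%:R) (e - a - N%:R) in
   Q N%:R != 0 ->
   LQ N a b c d e Q =
     1 / Q N%:R
     * (poch (1 + a) N * poch (1 - k%:R + a - d - e) N)
       / (poch (1 + a - d) N * poch (1 + a - e) N)
     * hypF N [:: 1 + a - b - c; d; e; - N%:R]
              [:: 1 + a - b; 1 + a - c; k%:R - a + d + e - N%:R]).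
Proof.
move=> Q HQ.
pose cf j := poch (- k%:R) j / (j`!%:R * poch (d - a - N%:R) j * poch (e - a - N%:R) j).
have EQ : forall n : nat, Q (N%:R - n%:R) = \sum_(j < k.+1) cf j * psi a N j n.
  move=> n; rewrite /Q /Q2; apply: eq_bigr => j _; rewrite /cf /psi.
  rewrite (_ : - (N%:R - n%:R) = n%:R - N%:R :> C); last by ring.
  rewrite (_ : N%:R - n%:R + (- a - 2%:R * N%:R) = - n%:R - a - N%:R :> C); last by ring.
  ring.
rewrite /LQ.
rewrite (eq_bigr (fun n : 'I_N.+1 => vw a N n * gde a b c n * gde a d e n
    * (\sum_(j < k.+1) cf j * psi a N j n) / Q N%:R)); last first.
  by move=> n _; rewrite W_split EQ mulrA.
rewrite -mulr_suml core //.
set y := 1 - k%:R + a - d - e.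
have IJ : forall i : nat, (i <= N)%N -> \sum_(j < k.+1) cf j *
         ((-1) ^+ i * poch (- N%:R) i * poch (1 + a) N * poch d i * poch e i *
          poch (1 + a - d - e) (N - i - j) * poch (- (N - i)%:R) j *
          (-1) ^+ j / (poch (1 + a - d) (N - j) * poch (1 + a - e) (N - j)))
   = (-1) ^+ i * poch (- N%:R) i * poch (1 + a) N * poch d i * poch e i
       * poch y (N - i) / (poch (1 + a - d) N * poch (1 + a - e) N).
  move=> i HiN.
  rewrite (eq_bigr (fun j : 'I_k.+1 => (-1) ^+ i * poch (- N%:R) i * poch (1 + a) N
       * poch d i * poch e i / (poch (1 + a - d) N * poch (1 + a - e) N) *
       (poch (- k%:R) j * poch (- (N - i)%:R) j * (-1) ^+ j
        * poch (1 + a - d - e) (N - i - j) / j`!%:R))); last first.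
    move=> j _.
    case: (leqP j N) => Hj; last first.
      rewrite [poch (- (N - i)%:R) j]poch_negnat; first by rewrite ?(mulr0, mul0r). lia.
    have E := beta_rel2 a d e Hj.
    have Hbj : poch (d - a - N%:R) j != 0 by apply: poch_neq0_le Hbe; have := ltn_ord j; lia.
    have Hgj : poch (e - a - N%:R) j != 0 by apply: poch_neq0_le Hga; have := ltn_ord j; lia.
    rewrite (_ : poch (1 + a - d) (N - j) * poch (1 + a - e) (N - j)
        = (poch (1 + a - d) N * poch (1 + a - e) N)
          / (poch (d - a - N%:R) j * poch (e - a - N%:R) j)); last first.
      by rewrite -E; field; rewrite Hbj Hgj.
    have hf := natr_fact_neq0 C j.
    rewrite /cf; field.
    by rewrite Hd He Hbj Hgj hf.
  rewrite -mulr_sumr (@vdm C k (1 + a - d - e) (N - i) k (leqnn k)).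
  by rewrite (_ : 1 + a - d - e - k%:R = y) // /y; ring.
rewrite (eq_bigr (fun i : 'I_N.+1 => poch (1 + a - b - c) i
      / (i`!%:R * poch (1 + a - b) i * poch (1 + a - c) i) *
      ((-1) ^+ i * poch (- N%:R) i * poch (1 + a) N * poch d i * poch e i
       * poch y (N - i) / (poch (1 + a - d) N * poch (1 + a - e) N)))); last first.
  by move=> i _; rewrite IJ // -ltnS.
rewrite /hypF mulr_suml mulr_sumr; apply: eq_bigr => i _.
rewrite !big_cons !big_nil.
have HiN : (i <= N)%N by rewrite -ltnS.
have T := @tail_rel C y N i HiN.
rewrite (_ : 1 - y - N%:R = k%:R - a + d + e - N%:R) in T; last by rewrite /y; ring.
rewrite -T.
have hf := natr_fact_neq0 C i.
have h1 : poch (1 + a - b) i != 0 by exact: poch_neq0_le Hb.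
have h2 : poch (1 + a - c) i != 0 by exact: poch_neq0_le Hc.
have h3 : poch (k%:R - a + d + e - N%:R) i != 0 by exact: poch_neq0_le Hde.
by field; rewrite h3 h2 h1 hf He Hd HQ.
Qed.


Lemma part2 (C : numClosedFieldType) (k N : nat) (a b c d e : C)
  (Ha2 : poch (a / 2%:R) N != 0)
  (Hb : poch (1 + a - b) N != 0) (Hc : poch (1 + a - c) N != 0)
  (Hd : poch (1 + a - d) N != 0) (He : poch (1 + a - e) N != 0)
  (HaN : poch (1 + a + N%:R) N != 0)
  (Hbe : poch (d - a - N%:R) k != 0) (Hga : poch (e - a - N%:R) k != 0)
  (Hde : poch (k%:R - a + d + e - N%:R) N != 0) :
  (forall f : C,
   poch (f - a - N%:R) k != 0 ->
   poch (1 + a - f) N != 0 ->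
   poch (1 - k%:R + a - f) N != 0 ->
   let Q := fun n => Q3 k n (- a - 2%:R * N%:R) (d - a - N%:R) (e - a - N%:R)
                        (f - a - N%:R) in
   Q N%:R != 0 ->
   LQ N a b c d e Q =
     1 / Q N%:R
     * (poch (1 + a) N * poch (1 - k%:R + a - d - e) N * poch (1 - k%:R + a - f) N)
       / (poch (1 + a - d) N * poch (1 + a - e) N * poch (1 + a - f) N)
     * hypF N [:: 1 + a - b - c; d; e; 1 + a - f; - N%:R]
              [:: 1 + a - b; 1 + a - c; k%:R - a + d + e - N%:R; 1 - k%:R + a - f]).
Proof.
move=> f Hdl Hf Hkf Q HQ.
set dl := f - a - N%:R.
set x := 1 + a - d - e.
pose cf j := poch (- k%:R) j * poch (k%:R + (dl - x)) j
   / (j`!%:R * poch (d - a - N%:R) j * poch (e - a - N%:R) j * poch dl j).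
have EQ : forall n : nat, Q (N%:R - n%:R) = \sum_(j < k.+1) cf j * psi a N j n.
  move=> n; rewrite /Q /Q3; apply: eq_bigr => j _; rewrite /cf /psi.
  rewrite (_ : - (N%:R - n%:R) = n%:R - N%:R :> C); last by ring.
  rewrite (_ : N%:R - n%:R + (- a - 2%:R * N%:R) = - n%:R - a - N%:R :> C); last by ring.
  rewrite (_ : k%:R - 1 - (- a - 2%:R * N%:R) + (d - a - N%:R) + (e - a - N%:R) + dl
     = k%:R + (dl - x)); last by rewrite /x; ring.
  ring.
rewrite /LQ.
rewrite (eq_bigr (fun n : 'I_N.+1 => vw a N n * gde a b c n * gde a d e n
    * (\sum_(j < k.+1) cf j * psi a N j n) / Q N%:R)); last first.
  by move=> n _; rewrite W_split EQ mulrA.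
rewrite -mulr_suml core //.
set y := 1 - k%:R + a - d - e.
have IJ : forall i : nat, (i <= N)%N -> \sum_(j < k.+1) cf j *
         ((-1) ^+ i * poch (- N%:R) i * poch (1 + a) N * poch d i * poch e i *
          poch (1 + a - d - e) (N - i - j) * poch (- (N - i)%:R) j *
          (-1) ^+ j / (poch (1 + a - d) (N - j) * poch (1 + a - e) (N - j)))
   = (-1) ^+ i * poch (- N%:R) i * poch (1 + a) N * poch d i * poch e i
       * poch y (N - i) * poch (1 - k%:R + a - f + i%:R) (N - i)
       / (poch (1 + a - d) N * poch (1 + a - e) N * poch (1 + a - f + i%:R) (N - i)).
  move=> i HiN.
  rewrite (eq_bigr (fun j : 'I_k.+1 => (-1) ^+ i * poch (- N%:R) i * poch (1 + a) N
       * poch d i * poch e i / (poch (1 + a - d) N * poch (1 + a - e) N) *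
       (phi (dl - x) j k * poch (- (N - i)%:R) j * (-1) ^+ j
        * poch x (N - i - j) / (j`!%:R * poch dl j)))); last first.
    move=> j _.
    case: (leqP j N) => Hj; last first.
      rewrite [poch (- (N - i)%:R) j]poch_negnat; first by rewrite ?(mulr0, mul0r).
      exact: leq_ltn_trans (leq_subr i N) Hj.
    have E := beta_rel2 a d e Hj.
    have Hbj : poch (d - a - N%:R) j != 0 by apply: poch_neq0_le Hbe; by rewrite -ltnS.
    have Hgj : poch (e - a - N%:R) j != 0 by apply: poch_neq0_le Hga; by rewrite -ltnS.
    have Hdj : poch dl j != 0 by apply: poch_neq0_le Hdl; by rewrite -ltnS.
    rewrite (_ : poch (1 + a - d) (N - j) * poch (1 + a - e) (N - j)
        = (poch (1 + a - d) N * poch (1 + a - e) N)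
          / (poch (d - a - N%:R) j * poch (e - a - N%:R) j)); last first.
      by rewrite -E; field; rewrite Hbj Hgj.
    have hf := natr_fact_neq0 C j.
    rewrite /cf /phi /x; field.
    by rewrite Hd He Hdj Hbj Hgj hf.
  rewrite -mulr_sumr.
  have Hfi : poch (1 - dl - (N - i)%:R) (N - i) != 0.
    rewrite (_ : 1 - dl - (N - i)%:R = 1 + a - f + i%:R); last by rewrite /dl natrB //; ring.
    exact: poch_neq0_shift.
  have S2 := @saal2 C k x dl (N - i) k Hdl (leqnn k).
  rewrite (_ : \sum_(j < k.+1) phi (dl - x) j k * poch (- (N - i)%:R) j * (-1) ^+ j
        * poch x (N - i - j) / (j`!%:R * poch dl j)
     = poch (x - k%:R) (N - i) * poch (1 - k%:R - dl - (N - i)%:R) (N - i)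
       / poch (1 - dl - (N - i)%:R) (N - i)); last first.
    by rewrite -S2 mulfK.
  rewrite (_ : 1 - dl - (N - i)%:R = 1 + a - f + i%:R); last by rewrite /dl natrB //; ring.
  rewrite (_ : 1 - k%:R - dl - (N - i)%:R = 1 - k%:R + a - f + i%:R); last by rewrite /dl natrB //; ring.
  rewrite (_ : x - k%:R = y); last by rewrite /x /y; ring.
  have h1 : poch (1 + a - f + i%:R) (N - i) != 0 by exact: poch_neq0_shift.
  by field; rewrite h1 Hd He.
rewrite (eq_bigr (fun i : 'I_N.+1 => poch (1 + a - b - c) i
      / (i`!%:R * poch (1 + a - b) i * poch (1 + a - c) i) *
      ((-1) ^+ i * poch (- N%:R) i * poch (1 + a) N * poch d i * poch e i
       * poch y (N - i) * poch (1 - k%:R + a - f + i%:R) (N - i)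
       / (poch (1 + a - d) N * poch (1 + a - e) N * poch (1 + a - f + i%:R) (N - i))))); last first.
  by move=> i _; rewrite IJ // -ltnS.
rewrite /hypF mulr_suml mulr_sumr; apply: eq_bigr => i _.
rewrite !big_cons !big_nil.
have HiN : (i <= N)%N by rewrite -ltnS.
have T := @tail_rel C y N i HiN.
have e1 : 1 - y - N%:R = k%:R - a + d + e - N%:R by rewrite /y; ring.
rewrite e1 in T.
rewrite -T.
have pf : poch (1 + a - f) N = poch (1 + a - f) i * poch (1 + a - f + i%:R) (N - i).
  by rewrite -pochD subnKC.
have pkf : poch (1 - k%:R + a - f) N = poch (1 - k%:R + a - f) i * poch (1 - k%:R + a - f + i%:R) (N - i).
  by rewrite -pochD subnKC.
rewrite pf pkf.
have hf := natr_fact_neq0 C i.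
have h1 : poch (1 + a - b) i != 0 by exact: poch_neq0_le Hb.
have h2 : poch (1 + a - c) i != 0 by exact: poch_neq0_le Hc.
have h3 : poch (k%:R - a + d + e - N%:R) i != 0 by exact: poch_neq0_le Hde.
have h4 : poch (1 + a - f) i != 0 by exact: poch_neq0_le Hf.
have h5 : poch (1 - k%:R + a - f) i != 0 by exact: poch_neq0_le Hkf.
have h6 : poch (1 + a - f + i%:R) (N - i) != 0 by exact: poch_neq0_shift.
by field; rewrite h5 h3 h2 h1 hf h6 h4 He Hd HQ.
Qed.

Theorem theorem10 (C : numClosedFieldType) (k N : nat) (a b c d e : C)
  (* genericity: no vanishing denominators on the left-hand side *)
  (Ha2 : poch (a / 2%:R) N != 0)
  (Hb : poch (1 + a - b) N != 0) (Hc : poch (1 + a - c) N != 0)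
  (Hd : poch (1 + a - d) N != 0) (He : poch (1 + a - e) N != 0)
  (HaN : poch (1 + a + N%:R) N != 0)
  (* denominators of Q_k^{(2)} *)
  (Hbe : poch (d - a - N%:R) k != 0) (Hga : poch (e - a - N%:R) k != 0)
  (* lower parameter of the 4F3 / 5F4 *)
  (Hde : poch (k%:R - a + d + e - N%:R) N != 0) :
  (let Q := fun n => Q2 k n (- a - 2%:R * N%:R) (d - a - N%:R) (e - a - N%:R) in
   Q N%:R != 0 ->
   LQ N a b c d e Q =
     1 / Q N%:R
     * (poch (1 + a) N * poch (1 - k%:R + a - d - e) N)
       / (poch (1 + a - d) N * poch (1 + a - e) N)
     * hypF N [:: 1 + a - b - c; d; e; - N%:R]
              [:: 1 + a - b; 1 + a - c; k%:R - a + d + e - N%:R])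
  /\
  (forall f : C,
   poch (f - a - N%:R) k != 0 ->
   poch (1 + a - f) N != 0 ->
   poch (1 - k%:R + a - f) N != 0 ->
   let Q := fun n => Q3 k n (- a - 2%:R * N%:R) (d - a - N%:R) (e - a - N%:R)
                        (f - a - N%:R) in
   Q N%:R != 0 ->
   LQ N a b c d e Q =
     1 / Q N%:R
     * (poch (1 + a) N * poch (1 - k%:R + a - d - e) N * poch (1 - k%:R + a - f) N)
       / (poch (1 + a - d) N * poch (1 + a - e) N * poch (1 + a - f) N)
     * hypF N [:: 1 + a - b - c; d; e; 1 + a - f; - N%:R]
              [:: 1 + a - b; 1 + a - c; k%:R - a + d + e - N%:R; 1 - k%:R + a - f]).

Proof.
by split; [apply: part1 | apply: part2].
Qed.
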